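(* Let $\underline{l}=\min_k l_k$ and let $\mathcal{Y}_c=\{y\in\mathbb{Z}: \lfloor-\beta/\underline{l}\rfloor\le y\le\lceil\beta/\underline{l}\rceil+\alpha\}$. Let $\mathcal{Y}$ be an output alphabet with $\mathcal{Y}_c\subseteq\mathcal{Y}\subseteq\mathbb{Z}$, let $\Delta\ge 0$, and let $P_{\mathbf{Y}|\mathbf{X}}\in\Gamma_{\mathcal{Y}}(\Delta)$. Then there exists a function $F:\mathcal{Y}^n\to\mathcal{Y}_c^n$ such that the policy $F\circ P_{\mathbf{Y}|\mathbf{X}}$ (i.e. $\mathbf{x}\mapsto$ the law of $F(\mathbf{Y})$ for $\mathbf{Y}\sim P_{\mathbf{Y}|\mathbf{X}=\mathbf{x}}$) belongs to $\Gamma_{\mathcal{Y}_c}(\Delta)$.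
   Context: Fix integers $\alpha\ge 1$, $\beta\ge 0$, $n\ge 1$, and an initial state $s_0\in\mathcal{S}=\{0,\dots,\beta\}$. Let $\mathcal{X}=\{0,\dots,\alpha\}$. For $\mathbf{x}\in\mathcal{X}^n$, $\mathbf{y}\in\mathbb{Z}^n$ the battery states are $s_i=s_0+\sum_{k=0}^{i-1}y_k-\sum_{k=0}^{i-1}x_k$, $i=0,\dots,n$, and for an output alphabet $\mathcal{Y}\subseteq\mathbb{Z}$ with $\mathcal{X}\subseteq\mathcal{Y}$, $\mathcal{Y}^n(s_0,\mathbf{x})=\{\mathbf{y}\in\mathcal{Y}^n: s_i\in\{0,\dots,\beta\}\ \forall i=0,\dots,n\}$. A battery policy with output alphabet $\mathcal{Y}$ is a conditional distribution $P_{\mathbf{Y}|\mathbf{X}}$ from $\mathcal{X}^n$ to $\mathcal{Y}^n$; it is feasible if $\mathrm{supp}(P_{\mathbf{Y}|\mathbf{X}=\mathbf{x}})\subseteq\mathcal{Y}^n(s_0,\mathbf{x})$ for all $\mathbf{x}$; the set of feasible policies is $\Omega_{\mathcal{Y}}(s_0)$. Market price: a positive integer $K$, block lengths $l_0,\dots,l_{K-1}\ge 1$ with $\sum_k l_k=n$, prices $m_0,\dots,m_{K-1}\in\mathbb{R}$, and $\mathbf{m}\in\mathbb{R}^n$ the vector equal to $m_k$ on the $l_k$ consecutive time steps of block $k$ (blocks in order). The cost of a policy at $\mathbf{x}$ is $g(P_{\mathbf{Y}|\mathbf{X}},\mathbf{x})=\mathbb{E}_{P_{\mathbf{Y}|\mathbf{X}=\mathbf{x}}}[\mathbf{m}^T\mathbf{Y}]-\min_{\mathbf{y}\in\mathcal{Y}^n(s_0,\mathbf{x})}\mathbf{m}^T\mathbf{y}$.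 For $\Delta\ge0$, $\Gamma_{\mathcal{Y}}(\Delta)=\{P_{\mathbf{Y}|\mathbf{X}}\in\Omega_{\mathcal{Y}}(s_0): g(P_{\mathbf{Y}|\mathbf{X}},\mathbf{x})\le\Delta\ \forall\mathbf{x}\in\mathcal{X}^n\}$ is the set of feasible $\Delta$-affordable policies. *)

(* Defs.v *)
From HB Require Import structures.
From mathcomp Require Import all_boot all_order all_algebra.
Set Implicit Arguments.
Unset Strict Implicit.
Unset Printing Implicit Defensive.
Import Order.TTheory GRing.Theory Num.Theory.
Local Open Scope ring_scope.

(* Input sequences x in X^n, X = {0..alpha}: n.-tuple 'I_alpha.+1.
   Output sequences y in Z^n: n.-tuple int. *)

Definition state (alpha n s0 : nat) (x : n.-tuple 'I_alpha.+1)
    (y : n.-tuple int) (i : nat) : int :=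
  s0%:Z + \sum_(k < n | (k < i)%N) tnth y k
        - \sum_(k < n | (k < i)%N) (nat_of_ord (tnth x k))%:Z.

Definition Yn_mem (Y : pred int) (alpha beta n s0 : nat)
    (x : n.-tuple 'I_alpha.+1) (y : n.-tuple int) : bool :=
  all Y y &&
  [forall i : 'I_n.+1, (0 <= state s0 x y i) && (state s0 x y i <= beta%:Z)].

(* The finite box [-beta, beta+alpha]^n, which contains Y^n(s0,x) for every
   Y ⊆ Z (since y_k = s_{k+1} - s_k + x_k).  Used only to enumerate the
   finite set Y^n(s0,x) in order to take its minimum. *)
Definition box (alpha beta n : nat) : seq (n.-tuple int) :=
  [seq map_tuple (fun i : 'I_(alpha + 2 * beta).+1 => (nat_of_ord i)%:Z - beta%:Z) t
  | t : n.-tuple 'I_(alpha + 2 * beta).+1].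

Definition Yn_seq (Y : pred int) (alpha beta n s0 : nat)
    (x : n.-tuple 'I_alpha.+1) : seq (n.-tuple int) :=
  [seq y <- box alpha beta n | Yn_mem Y beta s0 x y].

Definition mvec (R : realFieldType) (K : nat) (l : 'I_K -> nat) (mk : 'I_K -> R)
    (t : nat) : R :=
  \sum_(k < K)
     (if ((\sum_(j < K | (j < k)%N) l j <= t)
          && (t < \sum_(j < K | (j <= k)%N) l j))%N
      then mk k else 0).

Definition mdot (R : realFieldType) (K : nat) (l : 'I_K -> nat) (mk : 'I_K -> R)
    (n : nat) (y : n.-tuple int) : R :=
  \sum_(i < n) mvec l mk i * (tnth y i)%:~R.

(* minimum of f over a finite list (0 on the empty list; never used there) *)
Definition min_over (R : realFieldType) (T : Type) (S : seq T) (f : T -> R) : R :=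
  if S is y0 :: _ then \big[Num.min/f y0]_(y <- S) f y else 0.

(* A finitely supported probability distribution on Z^n, given as a list
   of (outcome, weight) pairs; its law assigns to y the total weight of y. *)
Definition fdist (R : realFieldType) (n : nat) := seq (n.-tuple int * R).

Definition is_dist (R : realFieldType) (n : nat) (d : fdist R n) : bool :=
  all (fun p => 0 <= p.2) d && (\sum_(p <- d) p.2 == 1).

Definition law (R : realFieldType) (n : nat) (d : fdist R n) (y : n.-tuple int) : R :=
  \sum_(p <- d | p.1 == y) p.2.

Definition expect_cost (R : realFieldType) (K : nat) (l : 'I_K -> nat)
    (mk : 'I_K -> R) (n : nat) (d : fdist R n) : R :=
  \sum_(p <- d) p.2 * @mdot R K l mk n p.1.

Definition policy (R : realFieldType) (alpha n : nat) :=
  n.-tuple 'I_alpha.+1 -> fdist R n.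

Definition cost (R : realFieldType) (Y : pred int) (alpha beta n s0 K : nat)
    (l : 'I_K -> nat) (mk : 'I_K -> R) (P : policy R alpha n)
    (x : n.-tuple 'I_alpha.+1) : R :=
  expect_cost l mk (P x) - min_over (Yn_seq Y beta s0 x) (@mdot R K l mk n).

Definition in_Gamma (R : realFieldType) (Y : pred int) (alpha beta n s0 K : nat)
    (l : 'I_K -> nat) (mk : 'I_K -> R) (Delta : R) (P : policy R alpha n) : Prop :=
  forall x : n.-tuple 'I_alpha.+1,
    [/\ is_dist (P x),
        (forall y, law (P x) y != 0 -> Yn_mem Y beta s0 x y)
      & cost Y beta s0 l mk P x <= Delta].

Definition push (R : realFieldType) (alpha n : nat)
    (F : n.-tuple int -> n.-tuple int) (P : policy R alpha n) : policy R alpha n :=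
  fun x => [seq (F p.1, p.2) | p <- P x].

(* underline l = min_k l_k  (n is a neutral start value since l_k <= n) *)
Definition lmin (K n : nat) (l : 'I_K -> nat) : nat := \big[minn/n]_(k < K) l k.

(* Y_c = { y : floor(-beta/lmin) <= y <= ceil(beta/lmin) + alpha };
   intdiv's %/ with positive divisor is floor division, and
   ceil(beta/L) = - floor(-beta/L). *)
Definition Yc (alpha beta L : nat) : pred int :=
  fun y => (((- beta%:Z) %/ L%:Z)%Z <= y)
           && (y <= - ((- beta%:Z) %/ L%:Z)%Z + alpha%:Z).

(* Main.v *)
Require Import Defs.
From HB Require Import structures.
From mathcomp Require Import all_boot all_order all_algebra.
From mathcomp Require Import zify ring lra.
From Stdlib Require Import ClassicalEpsilon.
Set Implicit Arguments.
Unset Strict Implicit.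
Unset Printing Implicit Defensive.
Import Order.TTheory GRing.Theory Num.Theory.
Local Open Scope ring_scope.

Section Core.
Variables (alpha beta n s0 : nat).
Implicit Types (x : n.-tuple 'I_alpha.+1) (y : n.-tuple int).

Definition yv (y : n.-tuple int) (t : nat) : int := nth 0 y t.
Definition xv (x : n.-tuple 'I_alpha.+1) (t : nat) : int := (nth ord0 x t : nat)%:Z.

Definition feas (x : n.-tuple 'I_alpha.+1) (y : n.-tuple int) : bool :=
  [forall i : 'I_n.+1, (0 <= state s0 x y i) && (state s0 x y i <= beta%:Z)].

Lemma xv_bd x t : 0 <= xv x t <= alpha%:Z.
Proof. rewrite /xv; have := ltn_ord (nth ord0 x t); lia. Qed.

Lemma sum_ltS (G : 'I_n -> int) i (Hi : (i < n)%N) :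
  \sum_(k < n | (k < i.+1)%N) G k = \sum_(k < n | (k < i)%N) G k + G (Ordinal Hi).
Proof.
rewrite (bigD1 (Ordinal Hi)) //= addrC; congr (_ + _); apply: eq_bigl => k.
rewrite -val_eqE /=; lia.
Qed.

Lemma st0 x y : state s0 x y 0 = s0%:Z.
Proof. by rewrite /state !big1 ?subr0 ?addr0. Qed.

Lemma stS x y i : (i < n)%N ->
  state s0 x y i.+1 = state s0 x y i + yv y i - xv x i.
Proof.
move=> Hi; rewrite /state (sum_ltS (fun k => tnth y k) Hi)
  (sum_ltS (fun k => (nat_of_ord (tnth x k))%:Z) Hi) /yv /xv.
rewrite (tnth_nth 0) (tnth_nth ord0) /=; ring.
Qed.

Definition mv (y : n.-tuple int) (j k : nat) : n.-tuple int :=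
  [tuple yv y t + ((t == j :> nat)%:Z - (t == k :> nat)%:Z) | t < n].

Lemma yv_mv y j k t : (t < n)%N ->
  yv (mv y j k) t = yv y t + ((t == j)%:Z - (t == k)%:Z).
Proof.
move=> Ht; rewrite /yv -[t]/(nat_of_ord (Ordinal Ht)) -(tnth_nth 0) tnth_mktuple //.
Qed.

Lemma st_mv x y j k i : (i <= n)%N ->
  state s0 x (mv y j k) i = state s0 x y i + ((j < i)%N%:Z - (k < i)%N%:Z).
Proof.
elim: i => [|i IH] Hi; first by rewrite !st0 !ltn0 subrr addr0.
have E m : (m < i.+1)%N%:Z = (m < i)%N%:Z + (i == m)%:Z.
  by rewrite ltnS leq_eqVlt eq_sym; case: (ltngtP m i).
rewrite !stS // IH; last exact: ltnW.
rewrite yv_mv // !E; ring.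
Qed.

Lemma feasP x y i : feas x y -> (i <= n)%N ->
  0 <= state s0 x y i /\ state s0 x y i <= beta%:Z.
Proof.
move=> /forallP H Hi; have := H (Ordinal (Hi : (i < n.+1)%N)) => /= /andP[]; done.
Qed.

Lemma feas_mv x y j k :
  (forall i, (i <= n)%N -> 0 <= state s0 x y i + ((j < i)%N%:Z - (k < i)%N%:Z) <= beta%:Z) ->
  feas x (mv y j k).
Proof.
move=> H; apply/forallP => i; have Hi : (i <= n)%N := ltn_ord i.
by rewrite st_mv //; apply: H.
Qed.

Lemma fwd_ind (s : nat -> int) (P : int -> Prop) k j :
  P (s k.+1) -> (forall i, (k < i < j)%N -> P (s i) -> P (s i.+1)) ->
  forall i, (k < i <= j)%N -> P (s i).
Proof.
move=> H0 HS i /andP[]; elim: i => [//|i IH] Hk Hj.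
rewrite ltnS leq_eqVlt in Hk; case/orP: Hk => [/eqP<-//|Hk].
apply: HS; first by rewrite Hk.
by apply: IH => //; apply: ltnW.
Qed.

Lemma bwd_ind (s : nat -> int) (P : int -> Prop) j k :
  P (s k) -> (forall i, (j < i < k)%N -> P (s i.+1) -> P (s i)) ->
  forall i, (j < i <= k)%N -> P (s i).
Proof.
move=> H0 HS.
suff H : forall d i, (j < i)%N -> (i + d)%N = k -> P (s i).
  move=> i /andP[Hj Hk]; apply: (H (k - i)%N) => //; exact: subnKC.
elim=> [|d IH] i Hj Hd; first by rewrite addn0 in Hd; rewrite Hd.
apply: HS; first by apply/andP; split => //; rewrite -Hd; lia.
apply: IH; [exact: ltnW | rewrite -Hd; lia].
Qed.

Variable L : nat.
Hypothesis L_gt0 : (0 < L)%N.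
Definition lo : int := ((- (beta%:Z)) %/ (L%:Z))%Z.
Definition hi : int := - lo + alpha%:Z.

Lemma loL : lo * L%:Z <= - (beta%:Z).
Proof. apply: lez_floor; lia. Qed.

Lemma lo_le0 : lo <= 0.
Proof. have := loL; have : (0 < L%:Z) by rewrite ltz_nat. nia. Qed.

Lemma up_fwd x y k j : feas x y -> (k < j < n)%N -> hi < yv y k ->
  (forall t, (k < t < j)%N -> hi <= yv y t) -> feas x (mv y j k).
Proof.
move=> Hf /andP[Hkj Hjn] Hk Hmid; apply: feas_mv => i Hi.
have [F1 F2] := feasP Hf Hi.
have low : forall i, (k < i <= j)%N -> 1 <= state s0 x y i.
  apply: (fwd_ind (s := state s0 x y) (P := fun v => 1 <= v)).
  - rewrite stS; last by apply: ltn_trans Hjn.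
    have [G1 _] := feasP Hf (ltnW (ltn_trans Hkj Hjn)).
    have := xv_bd x k; rewrite /hi in Hk; have := lo_le0; lia.
  - move=> t /andP[Hkt Htj] IH; rewrite stS; last by apply: ltn_trans Hjn.
    have := Hmid t (introT andP (conj Hkt Htj)); have := xv_bd x t.
    rewrite /hi; have := lo_le0; lia.
case: (boolP (k < i <= j)%N) => Hb.
  have := low i Hb; move: Hb; lia.
move: Hb; lia.
Qed.

Lemma up_bwd x y k j : feas x y -> (j < k < n)%N -> hi < yv y k ->
  (forall t, (j < t < k)%N -> hi <= yv y t) -> feas x (mv y j k).
Proof.
move=> Hf /andP[Hjk Hkn] Hk Hmid; apply: feas_mv => i Hi.
have [F1 F2] := feasP Hf Hi.
have up : forall i, (j < i <= k)%N -> state s0 x y i <= beta%:Z - 1.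
  apply: (bwd_ind (s := state s0 x y) (P := fun v => v <= beta%:Z - 1)).
  - have [_ G2] := feasP Hf Hkn; rewrite stS // in G2.
    have := xv_bd x k; rewrite /hi in Hk; have := lo_le0; lia.
  - move=> t /andP[Hjt Htk] IH; rewrite stS in IH; last by apply: ltn_trans Hkn.
    have := Hmid t (introT andP (conj Hjt Htk)); have := xv_bd x t.
    rewrite /hi; have := lo_le0; lia.
case: (boolP (j < i <= k)%N) => Hb.
  have := up i Hb; move: Hb; lia.
move: Hb; lia.
Qed.

Lemma lo_fwd x y k j : feas x y -> (k < j < n)%N -> yv y k < lo ->
  (forall t, (k < t < j)%N -> yv y t <= lo) -> feas x (mv y k j).
Proof.
move=> Hf /andP[Hkj Hjn] Hk Hmid; apply: feas_mv => i Hi.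
have [F1 F2] := feasP Hf Hi.
have up : forall i, (k < i <= j)%N -> state s0 x y i <= beta%:Z - 1.
  apply: (fwd_ind (s := state s0 x y) (P := fun v => v <= beta%:Z - 1)).
  - rewrite stS; last by apply: ltn_trans Hjn.
    have [_ G2] := feasP Hf (ltnW (ltn_trans Hkj Hjn)).
    have := xv_bd x k; have := lo_le0; lia.
  - move=> t /andP[Hkt Htj] IH; rewrite stS; last by apply: ltn_trans Hjn.
    have := Hmid t (introT andP (conj Hkt Htj)); have := xv_bd x t.
    have := lo_le0; lia.
case: (boolP (k < i <= j)%N) => Hb.
  have := up i Hb; move: Hb; lia.
move: Hb; lia.
Qed.

Lemma lo_bwd x y k j : feas x y -> (j < k < n)%N -> yv y k < lo ->
  (forall t, (j < t < k)%N -> yv y t <= lo) -> feas x (mv y k j).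
Proof.
move=> Hf /andP[Hjk Hkn] Hk Hmid; apply: feas_mv => i Hi.
have [F1 F2] := feasP Hf Hi.
have low : forall i, (j < i <= k)%N -> 1 <= state s0 x y i.
  apply: (bwd_ind (s := state s0 x y) (P := fun v => 1 <= v)).
  - have [G1 _] := feasP Hf Hkn; rewrite stS // in G1.
    have := xv_bd x k; have := lo_le0; lia.
  - move=> t /andP[Hjt Htk] IH; rewrite stS in IH; last by apply: ltn_trans Hkn.
    have := Hmid t (introT andP (conj Hjt Htk)); have := xv_bd x t.
    have := lo_le0; lia.
case: (boolP (j < i <= k)%N) => Hb.
  have := low i Hb; move: Hb; lia.
move: Hb; lia.
Qed.

Definition exc (v : int) : nat := absz (Num.max 0 (v - hi) + Num.max 0 (lo - v)).
Definition mu y : nat := (\sum_(t < n) exc (yv y t))%N.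

Lemma mu_lt y y' k : (k < n)%N ->
  (forall t, (t < n)%N -> exc (yv y' t) + (t == k) <= exc (yv y t))%N ->
  (mu y' < mu y)%N.
Proof.
move=> Hk H; rewrite /mu.
have : (\sum_(t < n) (exc (yv y' t) + (t == k :> nat)) <= \sum_(t < n) exc (yv y t))%N.
  by apply: leq_sum => t _; apply: H.
have Hone : (\sum_(t < n) (t == k :> nat) = 1)%N.
  rewrite (bigD1 (Ordinal Hk)) //= ?eqxx big1 // => t.
  by rewrite -val_eqE /= => /negbTE ->.
by rewrite big_split /= Hone addn1.
Qed.

Lemma mu_up y j k : (j < n)%N -> (k < n)%N -> j != k -> hi < yv y k -> yv y j < hi ->
  (mu (mv y j k) < mu y)%N.
Proof.
move=> Hj Hk Hjk H1 H2; apply: (mu_lt Hk) => t Ht; rewrite yv_mv // /exc.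
have := lo_le0; rewrite /hi in H1 H2 *.
case: (eqVneq t k) => [Etk|Ntk]; case: (eqVneq t j) => [Etj|Ntj].
- by move: Hjk; rewrite -Etk -Etj eqxx.
- subst t; rewrite ?eqxx ?(negbTE Ntj); lia.
- subst t; rewrite ?eqxx ?(negbTE Ntk); lia.
- rewrite ?(negbTE Ntk) ?(negbTE Ntj); lia.
Qed.

Lemma mu_lo y j k : (j < n)%N -> (k < n)%N -> j != k -> yv y k < lo -> lo < yv y j ->
  (mu (mv y k j) < mu y)%N.
Proof.
move=> Hj Hk Hjk H1 H2; apply: (mu_lt Hk) => t Ht; rewrite yv_mv // /exc.
have := lo_le0; rewrite /hi.
case: (eqVneq t k) => [Etk|Ntk]; case: (eqVneq t j) => [Etj|Ntj].
- by move: Hjk; rewrite -Etk -Etj eqxx.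
- subst t; rewrite ?eqxx ?(negbTE Ntj); lia.
- subst t; rewrite ?eqxx ?(negbTE Ntk); lia.
- rewrite ?(negbTE Ntk) ?(negbTE Ntj); lia.
Qed.

Variables (R : realFieldType) (K : nat) (l : 'I_K -> nat) (mk : 'I_K -> R).
Hypothesis Hsum : (\sum_(k < K) l k)%N = n.
Hypothesis HlL : forall b, (L <= l b)%N.

Lemma mvec_ind j : (j < n)%N ->
  \sum_(i < n) mvec l mk i * ((i == j :> nat)%:Z)%:~R = mvec l mk j.
Proof.
move=> Hj; rewrite (bigD1 (Ordinal Hj)) //= ?eqxx big1 ?addr0 ?mulr1 //.
by move=> i; rewrite -val_eqE /= => /negbTE ->; rewrite mulr0.
Qed.

Lemma mdot_mv y j k : (j < n)%N -> (k < n)%N ->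
  mdot l mk (mv y j k) = mdot l mk y + mvec l mk j - mvec l mk k.
Proof.
move=> Hj Hk; rewrite /mdot.
rewrite (eq_bigr (fun i : 'I_n => mvec l mk i * (tnth y i)%:~R +
   (mvec l mk i * ((i == j :> nat)%:Z)%:~R - mvec l mk i * ((i == k :> nat)%:Z)%:~R))); last first.
  by move=> i _; rewrite tnth_mktuple /yv -(tnth_nth 0) !intrD ?intrN ?intrB; ring.
by rewrite big_split /= sumrB !mvec_ind // addrA.
Qed.

Definition Bs (b : nat) : nat := (\sum_(j < K | (j < b)%N) l j)%N.
Definition Be (b : nat) : nat := (\sum_(j < K | (j <= b)%N) l j)%N.

Lemma Be_E (b : 'I_K) : Be b = (Bs b + l b)%N.
Proof.
rewrite /Be (bigD1 b) //= addnC; congr (_ + _)%N; apply: eq_bigl => j.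
rewrite -val_eqE /=; (lia || fail 0 "L1").
Qed.

Lemma sum_sub (P Q : pred 'I_K) : (forall j, P j -> Q j) ->
  (\sum_(j | P j) l j <= \sum_(j | Q j) l j)%N.
Proof.
move=> H; rewrite [X in (X <= _)%N]big_mkcond [X in (_ <= X)%N]big_mkcond.
apply: leq_sum => j _; case: (boolP (P j)) => Pj; first by rewrite (H j Pj).
by case: (Q j).
Qed.

Lemma Be_le_n b : (Be b <= n)%N.
Proof. by rewrite -Hsum; apply: sum_sub. Qed.

Lemma mvec_block (b : 'I_K) t : (Bs b <= t < Be b)%N -> mvec l mk t = mk b.
Proof.
move=> Ht; rewrite /mvec (bigD1 b) //=.
have -> : ((\sum_(j < K | (j < b)%N) l j <= t) && (t < \sum_(j < K | (j <= b)%N) l j))%N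
  by exact: Ht.
rewrite big1 ?addr0 // => b' Hb'.
case: ifP => // /andP[H1 H2]; exfalso.
case: (ltngtP b' b) => [lt|gt|eq].
- have : (Be b' <= Bs b)%N by apply: sum_sub => j /=; (lia || fail 0 "L2").
  move=> Hle; case/andP: Ht => Ht1 Ht2; have := leq_ltn_trans Ht1 (leq_trans H2 Hle); by rewrite ltnn.
- have : (Be b <= Bs b')%N by apply: sum_sub => j /=; (lia || fail 0 "L4").
  move=> Hle; case/andP: Ht => Ht1 Ht2; have := leq_ltn_trans H1 (leq_trans Ht2 Hle); by rewrite ltnn.
- by move: Hb'; rewrite -val_eqE /= eq eqxx.
Qed.

Lemma find_block t : (t < n)%N -> exists b : 'I_K, (Bs b <= t < Be b)%N.
Proof.
move=> Ht.
have K0 : (0 < K)%N.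
  case: K l Hsum => [|K'] l' Hs //; move: Ht; rewrite -Hs big_ord0 //.
have exP : exists m, (m < K)%N && (t < Be m)%N.
  exists K.-1; rewrite prednK // leqnn /=.
  have -> : Be K.-1 = n by rewrite -Hsum /Be; apply: eq_bigl => j; have := ltn_ord j; (lia || fail 0 "L6").
  done.
case: (ex_minnP exP) => m /andP[HmK Htm] Hmin.
exists (Ordinal HmK); rewrite /= Htm andbT.
case: m HmK Htm Hmin => [|m] HmK Htm Hmin.
  by rewrite /Bs big1.
have Hm' : (m < K)%N by apply: ltnW.
have : ~~ (t < Be m)%N.
  apply/negP => H; have := Hmin m; rewrite Hm' H /= => /(_ isT); (lia || fail 0 "L7").
rewrite -leqNgt /Bs /Be.
have -> : (\sum_(j < K | (j < m.+1)%N) l j = \sum_(j < K | (j <= m)%N) l j)%N by [].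
done.
Qed.

Lemma cap_up x0 y (b : 'I_K) k : feas x0 y -> (Bs b <= k < Be b)%N -> hi < yv y k ->
  exists j, (Bs b <= j < Be b)%N /\ yv y j < hi.
Proof.
move=> Hf Hk Hy.
case: (boolP (has (fun j => yv y j < hi) (iota (Bs b) (l b)))) => [/hasP [j Hj Hjy]|/hasPn Hn].
  by exists j; split => //; move: Hj; rewrite mem_iota Be_E.
exfalso.
have Hen : (Bs b + l b <= n)%N by rewrite -Be_E Be_le_n.
rewrite Be_E in Hk.
move: Hen Hk Hn; set a := Bs b => Hen Hk Hn.
have claim : forall d, (d <= l b)%N ->
    state s0 x0 y a + d%:Z * (- lo) + (k < a + d)%N%:Z <= state s0 x0 y (a + d).
  elim=> [|d IH] Hd.
    rewrite addn0 mul0r addr0.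
    have -> : (k < a)%N = false by move: Hk; lia.
    by rewrite addr0.
  have Had : (a + d < n)%N by lia.
  rewrite addnS stS // intS mulrDl mul1r.
  have IH' := IH (ltnW Hd).
  have hm : hi <= yv y (a + d).
    by rewrite leNgt; apply: Hn; rewrite mem_iota; lia.
  have := xv_bd x0 (a + d).
  move: IH' hm; rewrite /hi; generalize (d%:Z * - lo) => P.
  case: (eqVneq (a + d)%N k) => [E|NE].
    rewrite E; move: Hy; rewrite /hi; lia.
  lia.
have := claim (l b) (leqnn _).
have [G1 _] := feasP Hf (leq_trans (leq_addr _ _) Hen).
have [_ G2] := feasP Hf Hen.
have := loL; have := lo_le0; have := HlL b.
have -> : (k < a + l b)%N by case/andP: Hk.
nia.
Qed.

Lemma cap_lo x0 y (b : 'I_K) k : feas x0 y -> (Bs b <= k < Be b)%N -> yv y k < lo ->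
  exists j, (Bs b <= j < Be b)%N /\ lo < yv y j.
Proof.
move=> Hf Hk Hy.
case: (boolP (has (fun j => lo < yv y j) (iota (Bs b) (l b)))) => [/hasP [j Hj Hjy]|/hasPn Hn].
  by exists j; split => //; move: Hj; rewrite mem_iota Be_E.
exfalso.
have Hen : (Bs b + l b <= n)%N by rewrite -Be_E Be_le_n.
rewrite Be_E in Hk.
move: Hen Hk Hn; set a := Bs b => Hen Hk Hn.
have claim : forall d, (d <= l b)%N ->
    state s0 x0 y (a + d) <= state s0 x0 y a + d%:Z * lo - (k < a + d)%N%:Z.
  elim=> [|d IH] Hd.
    rewrite addn0 mul0r addr0.
    have -> : (k < a)%N = false by move: Hk; lia.
    by rewrite subr0.
  have Had : (a + d < n)%N by lia.
  rewrite addnS stS // intS mulrDl mul1r.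
  have IH' := IH (ltnW Hd).
  have hm : yv y (a + d) <= lo.
    by rewrite leNgt; apply: Hn; rewrite mem_iota; lia.
  have := xv_bd x0 (a + d).
  move: IH' hm; generalize (d%:Z * lo) => P.
  case: (eqVneq (a + d)%N k) => [E|NE].
    rewrite E; move: Hy; lia.
  lia.
have := claim (l b) (leqnn _).
have [_ G1] := feasP Hf (leq_trans (leq_addr _ _) Hen).
have [G2 _] := feasP Hf Hen.
have := loL; have := lo_le0; have := HlL b.
have -> : (k < a + l b)%N by case/andP: Hk.
nia.
Qed.

Definition good y y1 := [/\ (mu y1 < mu y)%N, mdot l mk y1 = mdot l mk y &
  forall x, feas x y -> feas x y1].

Lemma step_up x0 y t : feas x0 y -> (t < n)%N -> hi < yv y t -> exists y1, good y y1.
Proof.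
move=> Hf Ht Hy.
have [b Hb] := find_block Ht.
have [j0 [Hj0 Hyj0]] := cap_up Hf Hb Hy.
have Hne : j0 != t by apply/eqP => E; move: Hyj0 Hy; rewrite E; lia.
have [Hlt|Hgt] : (t < j0)%N \/ (j0 < t)%N by lia.
- pose P m := (((t < m)%N && (m < Be b)%N) && (yv y m < hi)).
  have exP : exists m, P m by exists j0; rewrite /P Hlt Hyj0; case/andP: Hj0 => _ ->.
  case: (ex_minnP exP) => j /andP[/andP[Htj Hjb] Hyj] Hmin.
  have Hjn : (j < n)%N := leq_trans Hjb (Be_le_n b).
  have Hbj : (Bs b <= j < Be b)%N by rewrite Hjb andbT; case/andP: Hb => H1 _; lia.
  exists (mv y j t); split.
  + apply: mu_up => //; by rewrite neq_ltn Htj orbT.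
  + by rewrite mdot_mv // (mvec_block Hbj) (mvec_block Hb) addrK.
  + move=> x Hx; apply: up_fwd => //; first by rewrite Htj.
    move=> u /andP[Htu Huj]; rewrite leNgt; apply/negP => Hu.
    have : P u by rewrite /P Htu Hu andbT /=; lia.
    by move/Hmin; lia.
- pose P m := (((Bs b <= m)%N && (m < t)%N) && (yv y m < hi)).
  have exP : exists m, P m by exists j0; rewrite /P Hgt Hyj0; case/andP: Hj0 => -> _.
  have ubP : forall i, P i -> (i <= t)%N by move=> i /andP[/andP[_ H] _]; apply: ltnW.
  case: (ex_maxnP exP ubP) => j /andP[/andP[Hbj Hjt] Hyj] Hmax.
  have Htn : (t < n)%N := Ht.
  have Hjn : (j < n)%N := ltn_trans Hjt Ht.
  have Hbj' : (Bs b <= j < Be b)%N by rewrite Hbj /=; case/andP: Hb => _ H2; lia.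
  exists (mv y j t); split.
  + apply: mu_up => //; by rewrite neq_ltn Hjt.
  + by rewrite mdot_mv // (mvec_block Hbj') (mvec_block Hb) addrK.
  + move=> x Hx; apply: up_bwd => //; first by rewrite Hjt.
    move=> u /andP[Hju Hut]; rewrite leNgt; apply/negP => Hu.
    have : P u by rewrite /P Hut Hu /= andbT; lia.
    by move/Hmax; lia.
Qed.

Lemma step_lo x0 y t : feas x0 y -> (t < n)%N -> yv y t < lo -> exists y1, good y y1.
Proof.
move=> Hf Ht Hy.
have [b Hb] := find_block Ht.
have [j0 [Hj0 Hyj0]] := cap_lo Hf Hb Hy.
have Hne : j0 != t by apply/eqP => E; move: Hyj0 Hy; rewrite E; lia.
have [Hlt|Hgt] : (t < j0)%N \/ (j0 < t)%N by lia.
- pose P m := (((t < m)%N && (m < Be b)%N) && (lo < yv y m)).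
  have exP : exists m, P m by exists j0; rewrite /P Hlt Hyj0; case/andP: Hj0 => _ ->.
  case: (ex_minnP exP) => j /andP[/andP[Htj Hjb] Hyj] Hmin.
  have Hjn : (j < n)%N := leq_trans Hjb (Be_le_n b).
  have Hbj : (Bs b <= j < Be b)%N by rewrite Hjb andbT; case/andP: Hb => H1 _; lia.
  exists (mv y t j); split.
  + apply: mu_lo => //; by rewrite neq_ltn Htj orbT.
  + by rewrite mdot_mv // (mvec_block Hbj) (mvec_block Hb) addrK.
  + move=> x Hx; apply: lo_fwd => //; first by rewrite Htj.
    move=> u /andP[Htu Huj]; rewrite leNgt; apply/negP => Hu.
    have : P u by rewrite /P Htu Hu andbT /=; lia.
    by move/Hmin; lia.
- pose P m := (((Bs b <= m)%N && (m < t)%N) && (lo < yv y m)).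
  have exP : exists m, P m by exists j0; rewrite /P Hgt Hyj0; case/andP: Hj0 => -> _.
  have ubP : forall i, P i -> (i <= t)%N by move=> i /andP[/andP[_ H] _]; apply: ltnW.
  case: (ex_maxnP exP ubP) => j /andP[/andP[Hbj Hjt] Hyj] Hmax.
  have Hjn : (j < n)%N := ltn_trans Hjt Ht.
  have Hbj' : (Bs b <= j < Be b)%N by rewrite Hbj /=; case/andP: Hb => _ H2; lia.
  exists (mv y t j); split.
  + apply: mu_lo => //; by rewrite neq_ltn Hjt.
  + by rewrite mdot_mv // (mvec_block Hbj') (mvec_block Hb) addrK.
  + move=> x Hx; apply: lo_bwd => //; first by rewrite Hjt.
    move=> u /andP[Hju Hut]; rewrite leNgt; apply/negP => Hu.
    have : P u by rewrite /P Hut Hu /= andbT; lia.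
    by move/Hmax; lia.
Qed.

Lemma not_all_Yc y : ~~ all (Yc alpha beta L) y ->
  exists2 t, (t < n)%N & (yv y t < lo) || (hi < yv y t).
Proof.
move=> H.
have [t Ht] : exists t : 'I_n, ~~ Yc alpha beta L (tnth y t).
  apply/existsP; rewrite -negb_forall; apply: contra H => /forallP H; exact/all_tnthP.
exists (val t); first exact: ltn_ord.
move: Ht; rewrite (tnth_nth 0) /Yc /= negb_and -!ltNge.
by rewrite /yv /hi /lo.
Qed.

Lemma exist_fix N y : (mu y <= N)%N -> (exists x0, feas x0 y) ->
  exists y', [/\ all (Yc alpha beta L) y', mdot l mk y' = mdot l mk y &
                 forall x, feas x y -> feas x y'].
Proof.
elim: N y => [|N IH] y Hmu [x0 Hx0];
 (case: (boolP (all (Yc alpha beta L) y)) => Hall; first by exists y; split);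
 (have [y1 [Hmu1 Hd1 Hf1]] : exists y1, good y y1 by
   have [t Ht /orP[H|H]] := not_all_Yc Hall;
     [exact: (step_lo Hx0 Ht H) | exact: (step_up Hx0 Ht H)]).
- (lia || fail 0 "M1").
- have Hm1 : (mu y1 <= N)%N by (lia || fail 0 "M2").
  have [y2 [H1 H2 H3]] := IH y1 Hm1 (ex_intro _ x0 (Hf1 _ Hx0)).
  exists y2; split => //; first by rewrite H2 Hd1.
  by move=> x Hx; apply: H3; apply: Hf1.
Qed.

Lemma Yc_nat (v : nat) : (v <= alpha)%N -> Yc alpha beta L v%:Z.
Proof. move=> Hv; rewrite /Yc /= -/lo; have := lo_le0; (lia || fail 0 "M3"). Qed.

Lemma in_box x y : feas x y -> y \in box alpha beta n.
Proof.
move=> Hf.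
have Hb : forall t : 'I_n, 0 <= tnth y t + beta%:Z <= (alpha + 2 * beta)%N%:Z.
  move=> t; have -> : tnth y t = yv y t by rewrite /yv (tnth_nth 0).
  have Ht := ltn_ord t.
  have [A1 A2] := feasP Hf (ltnW Ht); have [B1 B2] := feasP Hf Ht.
  rewrite stS // in B1 B2; have := xv_bd x t; move: B1 B2; lia.
pose tt := [tuple (inord (absz (tnth y t + beta%:Z)) : 'I_(alpha + 2 * beta).+1) | t < n].
apply/imageP; exists tt => //.
have E : forall v : int, 0 <= v + beta%:Z <= (alpha + 2 * beta)%N%:Z ->
    (absz (v + beta%:Z))%:Z - beta%:Z = v by move=> v; lia.
apply: eq_from_tnth => t; rewrite tnth_map tnth_mktuple inordK; last by have := Hb t; lia.
symmetry; apply: E; exact: Hb t.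
Qed.

Lemma xi_ok x : (s0 <= beta)%N -> Yn_seq (Yc alpha beta L) beta s0 x != [::].
Proof.
move=> Hs0.
pose xi := map_tuple (fun i : 'I_alpha.+1 => (nat_of_ord i)%:Z) x.
have Hst : forall i, state s0 x xi i = s0%:Z.
  move=> i; rewrite /state.
  have -> : \sum_(k < n | (k < i)%N) tnth xi k = \sum_(k < n | (k < i)%N) (nat_of_ord (tnth x k))%:Z.
    by apply: eq_bigr => k _; rewrite tnth_map.
  by rewrite addrK.
have Hf : feas x xi.
  by apply/forallP => i; rewrite Hst; apply/andP; split; lia.
apply/eqP => E.
have : xi \in Yn_seq (Yc alpha beta L) beta s0 x; last by rewrite E.
rewrite mem_filter (in_box Hf) andbT /Yn_mem.
apply/andP; split; last exact: Hf.
apply/all_tnthP => k; rewrite tnth_map; apply: Yc_nat.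
by rewrite -ltnS ltn_ord.
Qed.

Lemma exists_F : exists F : n.-tuple int -> n.-tuple int,
  forall y, all (Yc alpha beta L) (F y) /\
   ((exists x0, feas x0 y) ->
     mdot l mk (F y) = mdot l mk y /\ forall x, feas x y -> feas x (F y)).
Proof.
have G : forall y, exists y', all (Yc alpha beta L) y' /\
   ((exists x0, feas x0 y) ->
     mdot l mk y' = mdot l mk y /\ forall x, feas x y -> feas x y').
  move=> y; case: (boolP [exists x0, feas x0 y]) => [/existsP Hex|Hno].
  - have [y' [A B C]] := exist_fix (leqnn (mu y)) Hex.
    by exists y'.
  - exists [tuple (0 : int) | _ < n]; split.
      by apply/all_tnthP => t; rewrite tnth_mktuple; apply: (Yc_nat (v := 0%N)).
    move=> [x0 Hx0]; move: Hno; rewrite negb_exists => /forallP /(_ x0).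
    by rewrite Hx0.
exists (fun y => proj1_sig (constructive_indefinite_description _ (G y))).
move=> y; exact: (proj2_sig (constructive_indefinite_description _ (G y))).
Qed.

End Core.

Lemma bigmin_le (R : realFieldType) (T : eqType) (S : seq T) (f : T -> R) c z :
  z \in S -> \big[Num.min/c]_(y <- S) f y <= f z.
Proof.
elim: S => [//|a S IH]; rewrite big_cons in_cons => /orP[/eqP->|zin].
  by rewrite ge_min lexx.
by rewrite ge_min IH ?orbT.
Qed.

Lemma bigmin_att (R : realFieldType) (T : eqType) (S : seq T) (f : T -> R) c :
  \big[Num.min/c]_(y <- S) f y = c \/ exists2 z, z \in S & \big[Num.min/c]_(y <- S) f y = f z.
Proof.
elim: S => [|a S IH]; first by left; rewrite big_nil.
rewrite big_cons; case: (leP (f a) (\big[Num.min/c]_(y <- S) f y)) => H.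
  by right; exists a; rewrite ?mem_head ?min_l.
rewrite ?min_r ?(ltW H) //; case: IH => [->|[z zin ->]]; first by left.
by right; exists z => //; rewrite in_cons zin orbT.
Qed.

Lemma min_over_le (R : realFieldType) (T : eqType) (S1 S2 : seq T) (f : T -> R) :
  {subset S1 <= S2} -> S1 != [::] -> min_over S2 f <= min_over S1 f.
Proof.
case: S1 => [//|a S1] Hsub _.
have [z zin ->] : exists2 z, z \in a :: S1 & min_over (a :: S1) f = f z.
  rewrite /=; case: (bigmin_att (a :: S1) f (f a)) => [->|[z zin ->]].
    by exists a; rewrite ?mem_head.
  by exists z.
have z2 := Hsub z zin.
case: S2 Hsub z2 => [//|b S2] _ z2; rewrite /=; exact: bigmin_le.
Qed.

Lemma law_nz (R : realFieldType) n (d : fdist R n) p :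
  is_dist d -> p \in d -> p.2 != 0 -> law d p.1 != 0.
Proof.
move=> /andP[Hpos _] pin pnz; rewrite /law big_seq_cond.
rewrite psumr_eq0; last by move=> i /andP[iin _]; exact: (allP Hpos i iin).
apply/negP => /allP /(_ p pin); rewrite pin eqxx /=; exact/negP.
Qed.

Lemma bigminn_le (I : eqType) (r : seq I) (F : I -> nat) c b :
  b \in r -> (\big[minn/c]_(i <- r) F i <= F b)%N.
Proof.
elim: r => // a r IH; rewrite big_cons in_cons => /orP[/eqP->|H].
  exact: geq_minl.
by rewrite geq_min IH ?orbT.
Qed.

Unset Implicit Arguments.
Set Strict Implicit.

Theorem lemma4 (R : realFieldType) (alpha beta n s0 K : nat)
    (l : 'I_K -> nat) (mk : 'I_K -> R) (Y : pred int) (Delta : R)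
    (P : policy R alpha n) :
  (1 <= alpha)%N -> (1 <= n)%N -> (s0 <= beta)%N -> (0 < K)%N ->
  (forall k, 0 < l k)%N -> (\sum_(k < K) l k)%N = n ->
  (forall y, Yc alpha beta (lmin n l) y -> Y y) ->
  0 <= Delta ->
  in_Gamma Y beta s0 l mk Delta P ->
  exists F : n.-tuple int -> n.-tuple int,
    (forall y : n.-tuple int, all Y y -> all (Yc alpha beta (lmin n l)) (F y)) /\
    in_Gamma (Yc alpha beta (lmin n l)) beta s0 l mk Delta (push F P).
Proof.
move=> Ha Hn Hs0 HK Hl Hsum HYc HD HP.
have HL0 : (0 < lmin n l)%N.
  rewrite /lmin; apply: (big_ind (fun m => 0 < m)%N) => //.
  by move=> a b Ha' Hb'; rewrite leq_min Ha' Hb'.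
have HlL : forall b, (lmin n l <= l b)%N.
  by move=> b; rewrite /lmin; apply: bigminn_le; exact: mem_index_enum.
have [F HF] := @exists_F alpha beta n s0 (lmin n l) HL0 R K l mk Hsum HlL.
exists F; split; first by move=> y _; exact: (HF y).1.
move=> x; have [Hd Hsupp Hcost] := HP x.
have Hfe : forall p, p \in P x -> p.2 != 0 -> feas beta s0 x p.1.
  move=> p pin pnz; have := Hsupp p.1 (law_nz Hd pin pnz).
  by case/andP.
split.
- by move: Hd; rewrite /is_dist /push all_map big_map.
- move=> y Hly; move: Hly; rewrite /law /push big_map /=.
  case: (boolP (has (fun p => (F p.1 == y) && (p.2 != 0)) (P x))) =>
    [/hasP[p pin /andP[/eqP Fp pnz]]|/hasPn Hno]; last first.
    rewrite big1_seq ?eqxx // => p /andP[Fp pin].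
    by have := Hno p pin; rewrite Fp /= negbK => /eqP.
  move=> _; rewrite -Fp /Yn_mem; apply/andP; split; first exact: (HF p.1).1.
  have Hf := Hfe p pin pnz.
  exact: ((HF p.1).2 (ex_intro _ x Hf)).2 x Hf.
- have E : expect_cost l mk (push F P x) = expect_cost l mk (P x).
    rewrite /expect_cost /push big_map /=; apply: eq_big_seq => p pin /=.
    case: (eqVneq p.2 0) => [->|pnz]; first by rewrite !mul0r.
    have Hf := Hfe p pin pnz.
    by rewrite ((HF p.1).2 (ex_intro _ x Hf)).1.
  move: Hcost; rewrite /cost E.
  have := @min_over_le R _ (Yn_seq (Yc alpha beta (lmin n l)) beta s0 x)
    (Yn_seq Y beta s0 x) (@mdot R K l mk n).
  have Hsub : {subset Yn_seq (Yc alpha beta (lmin n l)) beta s0 x <= Yn_seq Y beta s0 x}.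
    move=> z; rewrite !mem_filter => /andP[Hm Hb]; rewrite Hb andbT.
    move: Hm; rewrite /Yn_mem => /andP[Ha' Hff]; rewrite Hff andbT.
    exact: sub_all Ha'.
  move=> /(_ Hsub (xi_ok HL0 Hsum x Hs0)); lra.
Qed.
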